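(* Let $F$ be an algebraically closed field of characteristic $\neq 2$, $R=F[t]$ with the involution ${}^*$ described in the context. Let $A,B\in M_2(R)$ be skew-hermitian with $\gcd(A)=\gcd(B)=1$ and $\det(A)=\det(B)\neq 0$. Then $A$ and $B$ are congruent.
   Context: $R=F[t]$ is the polynomial ring over $F$, and ${}^*$ is the $F$-algebra involution of $R$ that is the identity on $F$ and sends $t$ to $-t$. For $A=(a_{ij})\in M_n(R)$, $A^*$ is the matrix whose $(i,j)$ entry is $a_{ji}^*$; $A$ is skew-hermitian if $A^*=-A$. Congruence: $B=S^*AS$ for some $S\in\mathrm{GL}_n(R)$. $\gcd(A)$ denotes the monic generator (or $0$) of the ideal generated by all entries of $A$. *)

(* Defs.v *)
From HB Require Import structures.
From mathcomp Require Import all_boot all_order all_algebra.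
Set Implicit Arguments. Unset Strict Implicit. Unset Printing Implicit Defensive.
Import GRing.Theory.
Local Open Scope ring_scope.

Definition pstar (F : fieldType) (p : {poly F}) : {poly F} := p \Po (- 'X).

Definition mxstar (F : fieldType) (m n : nat) (A : 'M[{poly F}]_(m, n))
  : 'M[{poly F}]_(n, m) := \matrix_(i, j) pstar (A j i).

Definition skew_hermitian (F : fieldType) (n : nat) (A : 'M[{poly F}]_n) : Prop :=
  mxstar A = - A.

(* gcd(A) = 1 : the ideal of R generated by all entries of A is R itself,
   i.e. 1 is an R-linear combination of the entries of A. *)
Definition gcd_mx_is_one (F : fieldType) (m n : nat) (A : 'M[{poly F}]_(m, n)) : Prop :=
  exists c : 'M[{poly F}]_(m, n), \sum_(i < m) \sum_(j < n) c i j * A i j = 1.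

Definition congruent (F : fieldType) (n : nat) (A B : 'M[{poly F}]_n) : Prop :=
  exists2 S : 'M[{poly F}]_n, S \in unitmx & B = mxstar S *m A *m S.

(* Main.v *)
Require Import Defs.
From HB Require Import structures.
From mathcomp Require Import all_boot all_order all_algebra.
From mathcomp Require Import ring zify.
Set Implicit Arguments. Unset Strict Implicit. Unset Printing Implicit Defensive.
Import GRing.Theory.
Local Open Scope ring_scope.
Section Infra.
Variable F : closedFieldType.
Implicit Types p q : {poly F}.
Local Notation P := {poly F}.

Lemma pstarE p : pstar p = comp_poly (- 'X) p. Proof. by []. Qed.
Lemma pstarD p q : pstar (p + q) = pstar p + pstar q.
Proof. by rewrite !pstarE rmorphD. Qed.
Lemma pstarN p : pstar (- p) = - pstar p.
Proof. by rewrite !pstarE rmorphN. Qed.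
Lemma pstarB p q : pstar (p - q) = pstar p - pstar q.
Proof. by rewrite !pstarE rmorphB. Qed.
Lemma pstarM p q : pstar (p * q) = pstar p * pstar q.
Proof. by rewrite !pstarE rmorphM. Qed.
Lemma pstarC (c : F) : pstar c%:P = c%:P.
Proof. by rewrite /pstar comp_polyC. Qed.
Lemma pstar1 : pstar (1 : P) = 1. Proof. exact: pstarC 1. Qed.
Lemma pstar0 : pstar (0 : P) = 0. Proof. exact: pstarC 0. Qed.
Lemma pstarX : pstar ('X : P) = - 'X. Proof. by rewrite /pstar comp_polyX. Qed.
Lemma pstarK p : pstar (pstar p) = p.
Proof.
rewrite /pstar -comp_polyA. have -> : (- 'X : P) \Po - 'X = 'X.
  by rewrite -(pstarE (- 'X)) pstarN pstarX opprK.
by rewrite comp_polyXr.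
Qed.
Lemma pstar_horner p (x : F) : (pstar p).[x] = p.[- x].
Proof. by rewrite /pstar horner_comp hornerN hornerX. Qed.
Lemma pstar_sum (I : Type) (r : seq I) (f : I -> P) :
  pstar (\sum_(i <- r) f i) = \sum_(i <- r) pstar (f i).
Proof. by rewrite pstarE rmorph_sum. Qed.
Lemma pstar_eq0 p : (pstar p == 0) = (p == 0).
Proof.
apply/eqP/eqP => [h|->]; last exact: pstar0.
by rewrite -(pstarK p) h pstar0.
Qed.

Definition pstarE2 := (pstarD, pstarN, pstarB, pstarM, pstarC, pstar1, pstar0, pstarX, pstarK).

Lemma sum2 (R : nmodType) (f : 'I_2 -> R) : \sum_i f i = f 0 + f 1.
Proof. by rewrite big_ord_recl big_ord1; congr (f _ + f _); apply/val_inj. Qed.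

Lemma mx2P (R : Type) (M N : 'M[R]_2) : M 0 0 = N 0 0 -> M 0 1 = N 0 1 -> M 1 0 = N 1 0 -> M 1 1 = N 1 1 -> M = N.
Proof.
move=> h00 h01 h10 h11; apply/matrixP => i j.
have Ei : i = 0 \/ i = 1.
  case: i => [[|[|i]] Hi]; [left|right|by []]; exact: val_inj.
have Ej : j = 0 \/ j = 1.
  case: j => [[|[|j]] Hj]; [left|right|by []]; exact: val_inj.
by case: Ei => ->; case: Ej => ->.
Qed.

Lemma det2 (R : comRingType) (M : 'M[R]_2) : \det M = M 0 0 * M 1 1 - M 0 1 * M 1 0.
Proof.
rewrite (expand_det_row _ 0) sum2 /cofactor !det_mx11.
rewrite !mxE expr0 expr1 !mul1r mulN1r.
have -> : lift (0 : 'I_2) (0 : 'I_1) = 1 by apply/val_inj.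
have -> : lift (1 : 'I_2) (0 : 'I_1) = 0 by apply/val_inj.
by rewrite mulrN.
Qed.

Definition mk2 (R : Type) (a b c d : R) : 'M[R]_2 :=
  \matrix_(i, j) if i == 0 then (if j == 0 then a else b) else (if j == 0 then c else d).
Lemma mk2_00 (R : Type) (a b c d : R) : mk2 a b c d 0 0 = a. Proof. by rewrite mxE. Qed.
Lemma mk2_01 (R : Type) (a b c d : R) : mk2 a b c d 0 1 = b. Proof. by rewrite mxE. Qed.
Lemma mk2_10 (R : Type) (a b c d : R) : mk2 a b c d 1 0 = c. Proof. by rewrite mxE. Qed.
Lemma mk2_11 (R : Type) (a b c d : R) : mk2 a b c d 1 1 = d. Proof. by rewrite mxE. Qed.
Definition mk2E := (mk2_00, mk2_01, mk2_10, mk2_11).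

Lemma mxstarE m n (A : 'M[P]_(m, n)) i j : mxstar A i j = pstar (A j i).
Proof. by rewrite mxE. Qed.

Lemma mxstar_mul m n k (A : 'M[P]_(m, n)) (B : 'M[P]_(n, k)) :
  mxstar (A *m B) = mxstar B *m mxstar A.
Proof.
apply/matrixP => i j; rewrite !mxE pstar_sum; apply: eq_bigr => l _.
by rewrite !mxE pstarM mulrC.
Qed.

Lemma mxstarK m n (A : 'M[P]_(m, n)) : mxstar (mxstar A) = A.
Proof. by apply/matrixP => i j; rewrite !mxE pstarK. Qed.

Lemma mxstarN m n (A : 'M[P]_(m, n)) : mxstar (- A) = - mxstar A.
Proof. by apply/matrixP => i j; rewrite !mxE pstarN. Qed.

Lemma mxstar1 n : mxstar (1%:M : 'M[P]_n) = 1%:M.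
Proof.
apply/matrixP => i j; rewrite !mxE eq_sym.
by case: eqP => _; rewrite /= ?pstar1 ?pstar0.
Qed.

Lemma congE (S A : 'M[P]_2) i j :
  (mxstar S *m A *m S) i j =
  pstar (S 0 i) * (A 0 0 * S 0 j + A 0 1 * S 1 j) +
  pstar (S 1 i) * (A 1 0 * S 0 j + A 1 1 * S 1 j).
Proof.
rewrite !mxE sum2 !mxE !sum2 !mxE; ring.
Qed.

Lemma det_mxstar (S : 'M[P]_2) : \det (mxstar S) = pstar (\det S).
Proof. by rewrite !det2 !mxE pstarB !pstarM; ring. Qed.

Definition c1 (A B : 'M[P]_2) := exists2 S : 'M[P]_2, \det S = 1 & B = mxstar S *m A *m S.

Lemma c1_refl A : c1 A A.
Proof. by exists 1%:M; rewrite ?det1 // mxstar1 mul1mx mulmx1. Qed.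

Lemma c1_trans A B C : c1 A B -> c1 B C -> c1 A C.
Proof.
move=> [S dS ->] [T dT ->]; exists (S *m T); first by rewrite det_mulmx dS dT mulr1.
by rewrite mxstar_mul !mulmxA.
Qed.

Lemma c1_det A B : c1 A B -> \det B = \det A.
Proof. by move=> [S dS ->]; rewrite !det_mulmx det_mxstar dS pstar1 mul1r mulr1. Qed.

Lemma c1_skew A B : skew_hermitian A -> c1 A B -> skew_hermitian B.
Proof.
rewrite /skew_hermitian => sA [S _ ->].
by rewrite !mxstar_mul mxstarK sA mulNmx mulmxN mulmxA.
Qed.

Lemma c1_cong A B : c1 A B -> congruent A B.
Proof. by move=> [S dS ->]; exists S; rewrite // unitmxE dS unitr1. Qed.

Lemma skewE (A : 'M[P]_2) : skew_hermitian A ->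
  [/\ pstar (A 0 0) = - A 0 0, pstar (A 1 1) = - A 1 1 & A 1 0 = - pstar (A 0 1)].
Proof.
rewrite /skew_hermitian => sA.
have h i j : pstar (A j i) = - A i j by rewrite -mxstarE sA mxE.
by split; rewrite ?h ?opprK.
Qed.

Lemma detskew (A : 'M[P]_2) : skew_hermitian A ->
  \det A = A 0 0 * A 1 1 + A 0 1 * pstar (A 0 1).
Proof. by move=> /skewE[_ _ h]; rewrite det2 h mulrN opprK. Qed.

End Infra.
Section L.
Variable F : closedFieldType.
Hypothesis hchar : (2%:R : F) != 0.
Local Notation P := {poly F}.

Lemma half2 (e : P) : (2^-1 : F)%:P * (e + e) = e.
Proof.
have h : (2^-1 : F) + 2^-1 = 1.
  by rewrite -mulr2n -(mulr_natr (2^-1 : F) 2) mulVf.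
by rewrite mulrDr -mulrDl -polyCD h mul1r.
Qed.

Lemma stepL (A : 'M[P]_2) : skew_hermitian A -> A 0 0 = 0 ->
  (exists al be : P, al * A 0 1 + be * pstar (A 0 1) = 1) ->
  exists2 B, c1 A B & B 0 0 = 'X.
Proof.
move=> sA a0 [al [be hb]]; have [s00 s11 s10] := skewE sA.
set c := A 0 1 in hb s10 *; set d := A 1 1 in s11 *.
set e := 'X - d.
have pe : pstar e = - e by rewrite /e pstarB pstarX s11 opprD.
set u := al * e; set w := be * e.
have H1 : c * u + pstar c * w = e by rewrite /u /w -[RHS]mul1r -hb; ring.
have H2 : pstar c * pstar u + c * pstar w = - e.
  by rewrite -pe -H1 pstarD !pstarM pstarK; ring.
set x := (2^-1 : F)%:P * (pstar u - w).
have px : pstar x = (2^-1 : F)%:P * (u - pstar w) by rewrite /x pstarM pstarC pstarB pstarK.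
exists (mxstar (mk2 x (-1) 1 0) *m A *m mk2 x (-1) 1 0).
  by exists (mk2 x (-1) 1 0); rewrite // det2 !mk2E; ring.
rewrite congE !mk2E a0 s10 px pstar1 -/c -/d.
have -> : (2^-1 : F)%:P * (u - pstar w) * (0 * x + c * 1) + 1 * (- pstar c * x + d * 1)
  = (2^-1 : F)%:P * ((c * u + pstar c * w) - (pstar c * pstar u + c * pstar w)) + d.
  by rewrite /x; ring.
by rewrite H1 H2 opprK half2 /e subrK.
Qed.
End L.
Section M.
Variable F : closedFieldType.
Local Notation P := {poly F}.

Lemma bez (p : P) : p != 0 -> (forall x, p.[x] = 0 -> p.[-x] != 0) ->
  exists al be : P, al * p + be * pstar p = 1.
Proof.
move=> p0 hp.
have cop : coprimep p (pstar p).
  rewrite coprimep_def; apply/negPn/negP => /closed_rootP[x].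
  rewrite root_gcd => /andP[/rootP h1 /rootP h2].
  by move: (hp x h1); rewrite -pstar_horner h2 eqxx.
by have [[u v] /= h] := Bezout_eq1_coprimepP _ _ cop; exists u, v.
Qed.

Lemma stepIso (A : 'M[P]_2) (c : P) : skew_hermitian A -> \det A != 0 ->
  (forall r, (\det A).[r] = 0 -> (A 0 0).[r] != 0) ->
  c * pstar c = \det A -> (forall x, c.[x] = 0 -> c.[-x] != 0) ->
  exists2 B, c1 A B & [/\ B 0 0 = 0, B 0 1 != 0 &
     forall x, (B 0 1).[x] = 0 -> (B 0 1).[-x] != 0].
Proof.
move=> sA dA0 H hc Cc.
have [s00 s11 s10] := skewE sA.
have dAE := detskew sA.
move: H s00 s11 s10 dAE.
move Ea: (A 0 0) => a; move Eb: (A 0 1) => b; move Ed: (A 1 1) => d.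
move=> H s00 s11 s10 dAE.
have [a0|an0] := eqVneq a 0.
  exists A; first exact: c1_refl.
  rewrite Ea Eb; split => //.
    by apply: contraNneq dA0 => b0; rewrite dAE b0 a0 !mul0r addr0.
  move=> x bx; suff : (\det A).[x] = 0 by move/H; rewrite a0 horner0 eqxx.
  by rewrite dAE hornerD !hornerM bx a0 !horner0 !mul0r addr0.
set v1' := c - b; set g := gcdp v1' a.
have g0 : g != 0 by rewrite gcdp_eq0 negb_and an0 orbT.
have cop : coprimep (v1' %/ g) (a %/ g) by apply: coprimep_div_gcd; rewrite an0 orbT.
have [[w2 mw1] /= hw] := Bezout_eq1_coprimepP _ _ cop.
set v1 := v1' %/ g in cop hw *; set v2 := a %/ g in cop hw *.
have ev1 : v1 * g = v1' by rewrite divpK ?dvdp_gcdl.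
have ev2 : v2 * g = a by rewrite divpK ?dvdp_gcdr.
set w1 := - mw1.
have hdet : v1 * w2 - v2 * w1 = 1 by rewrite /w1 -hw; ring.
set S := mk2 v1 w1 v2 w2.
have dS : \det S = 1 by rewrite det2 !mk2E -hdet; ring.
have cAB : c1 A (mxstar S *m A *m S) by exists S.
set B := mxstar S *m A *m S in cAB *.
have sB := c1_skew sA cAB.
have dB := c1_det cAB.
set Pv := pstar v1 * a - pstar v2 * pstar b.
set Qv := pstar v1 * b + pstar v2 * d.
have B00 : B 0 0 = Pv * v1 + Qv * v2.
  by rewrite /B congE !mk2E Ea Eb Ed s10 /Pv /Qv; ring.
have B01 : B 0 1 = Pv * w1 + Qv * w2.
  by rewrite /B congE !mk2E Ea Eb Ed s10 /Pv /Qv; ring.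
have q0 : B 0 0 = 0.
  have h : B 0 0 * (g * pstar g) = a * (c * pstar c - (a * d + b * pstar b)).
    rewrite B00 /Pv /Qv.
    transitivity ((pstar (v1 * g) * a - pstar (v2 * g) * pstar b) * (v1 * g)
       + (pstar (v1 * g) * b + pstar (v2 * g) * d) * (v2 * g)).
      rewrite !pstarM; ring.
    rewrite ev1 ev2 s00 /v1' pstarB; ring.
  move: h; rewrite hc -dAE subrr mulr0 => /eqP; rewrite mulf_eq0 => /orP[/eqP //|].
  by rewrite mulf_eq0 pstar_eq0 (negPf g0).
have hP : Pv = - (v2 * B 0 1).
  have hq : Pv * v1 + Qv * v2 = 0 by rewrite -B00.
  rewrite B01; apply/eqP; rewrite -subr_eq0 opprK.
  have -> : Pv + v2 * (Pv * w1 + Qv * w2) = Pv * (1 - (v1 * w2 - v2 * w1)) + w2 * (Pv * v1 + Qv * v2) by ring.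
  by rewrite hdet subrr mulr0 hq mulr0 addr0.
have hg : pstar c * a = - (pstar g * v2 * B 0 1).
  transitivity (pstar g * Pv); last by rewrite hP; ring.
  transitivity (pstar (v1 * g) * a - pstar (v2 * g) * pstar b); last by rewrite /Pv !pstarM; ring.
  rewrite ev1 ev2 s00 /v1' pstarB; ring.
have dAB : \det A = B 0 1 * pstar (B 0 1) by rewrite -dB detskew // q0 mul0r add0r.
exists B => //; split => //.
  by apply: contraNneq dA0 => b0; rewrite dAB b0 mul0r.
move=> x h1; apply/negP => /eqP h2.
have key y : (B 0 1).[y] = 0 -> c.[- y] = 0.
  move=> hy; have dy : (\det A).[y] = 0 by rewrite dAB hornerM hy mul0r.
  have := H y dy; apply: contraNeq => cy.
  have : (pstar c * a).[y] = 0 by rewrite hg hornerN !hornerM hy mulr0 oppr0.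
  by rewrite hornerM pstar_horner => /eqP; rewrite mulf_eq0 (negPf cy).
have := Cc x; rewrite -[x]opprK (key _ h2) opprK => /(_ erefl).
by rewrite (key _ h1) eqxx.
Qed.
End M.
Section N.
Variable F : closedFieldType.
Hypothesis hchar : (2%:R : F) != 0.
Local Notation P := {poly F}.

Lemma sqrt_ex (k : F) : exists s, s * s = k.
Proof.
have : size ('X^2 - k%:P : P) != 1 by rewrite size_XnsubC.
case/closed_rootP => s /rootP; rewrite hornerD hornerXn hornerN hornerC => /eqP.
by rewrite subr_eq0 => /eqP <-; exists s; rewrite expr2.
Qed.

Lemma neg_ne (r : F) : r != 0 -> - r != r.
Proof.
move=> r0; apply/eqP => h; move: r0.
have : r *+ 2 = 0 by rewrite mulr2n -{1}h addNr.
by move/eqP; rewrite -mulr_natr mulf_eq0 (negPf hchar) orbF => /eqP ->; rewrite eqxx.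
Qed.

Lemma factor_norm (dl : P) : dl != 0 -> pstar dl = dl -> dl.[0] != 0 ->
  exists c : P, c * pstar c = dl /\ forall x, c.[x] = 0 -> c.[-x] != 0.
Proof.
have [n] := ubnP (size dl); elim: n dl => // n IH dl szn dl0 pdl d00.
have [i hi] := sqrt_ex (-1).
have i0 : i != 0.
  by apply/eqP => i0; move: hi; rewrite i0 mul0r => /eqP; rewrite eq_sym oppr_eq0 oner_eq0.
have ii : i%:P * i%:P = -1 :> P by rewrite -polyCM hi polyCN.
have [sz1|szn1] := boolP (size dl == 1).
  have [k k0 ek] := size_poly1P _ sz1.
  have [s hs] := sqrt_ex k.
  exists s%:P; split; first by rewrite pstarC -polyCM hs.
  move=> x; rewrite hornerC => s0; move: hs; rewrite s0 mul0r => k0'.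
  by move: k0; rewrite -k0' eqxx.
have /closed_rootP[r rr] := szn1.
have r0 : r != 0 by apply: contraNneq d00 => r0; rewrite -{1}r0.
have rmr : root dl (- r) by rewrite -pdl /root pstar_horner opprK.
have /factor_theorem[q1 e1] := rr.
have rq1 : root q1 (- r).
  move: rmr; rewrite e1 /root hornerM hornerXsubC mulf_eq0 => /orP[//|].
  rewrite -opprD oppr_eq0 -mulr2n -mulr_natr mulf_eq0 (negPf r0) /=.
  by rewrite (negPf hchar).
have /factor_theorem[q2 e2] := rq1.
have q20 : q2 != 0 by apply: contraNneq dl0 => q0; rewrite e1 e2 q0 !mul0r.
have edl : dl = q2 * (('X - (- r)%:P) * ('X - r%:P)) by rewrite e1 e2 mulrA.
have m0 : ('X - (- r)%:P) * ('X - r%:P) != 0 :> P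
  by rewrite mulf_eq0 !polyXsubC_eq0.
have pq2 : pstar q2 = q2.
  apply: (mulIf m0); rewrite -edl -[in RHS]pdl edl !pstarE2; ring.
have q200 : q2.[0] != 0.
  by move: d00; rewrite edl !hornerM !hornerXsubC; apply: contraNneq => ->; rewrite mul0r.
have szq2 : (size q2 < n)%N.
  move: szn; rewrite edl size_mul // size_mul ?polyXsubC_eq0 // !size_XsubC /=.
  case: (size q2) => [|m] /=; lia.
have [c2 [hc2 Cc2]] := IH q2 szq2 q20 pq2 q200.
have [c2r|c2r] := eqVneq c2.[- r] 0.
  exists (i%:P * ('X - (- r)%:P) * c2); split.
    rewrite !pstarE2 edl -hc2.
    transitivity ((i%:P * i%:P) * (- ('X - (- r)%:P) * ('X - r%:P) * (c2 * pstar c2))); first by ring.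
    by rewrite ii; ring.
  move=> x h; apply/negP => /eqP h'; move: h h'; rewrite !hornerM !hornerC !hornerXsubC.
  move=> /eqP h /eqP h'; move: h h'; rewrite !mulf_eq0 (negPf i0) /= !subr_eq0 eqr_opp.
  have Cr := Cc2 _ c2r; rewrite opprK in Cr.
  case/orP => [/eqP xr | c2x]; case/orP => [/eqP xr' | c2x'].
  - by move: (neg_ne r0); rewrite -xr xr' eqxx.
  - by move: c2x'; rewrite xr opprK (negPf Cr).
  - by move: c2x; rewrite xr' (negPf Cr).
  - by move: (Cc2 _ (eqP c2x)); rewrite c2x'.
exists (i%:P * ('X - r%:P) * c2); split.
  rewrite !pstarE2 edl -hc2.
  transitivity ((i%:P * i%:P) * (- ('X - (- r)%:P) * ('X - r%:P) * (c2 * pstar c2))); first by ring.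
  by rewrite ii; ring.
move=> x h; apply/negP => /eqP h'; move: h h'; rewrite !hornerM !hornerC !hornerXsubC.
move=> /eqP h /eqP h'; move: h h'; rewrite !mulf_eq0 (negPf i0) /= !subr_eq0 eqr_oppLR.
case/orP => [/eqP xr | c2x]; case/orP => [/eqP xr' | c2x'].
- by move: (neg_ne r0); rewrite -{2}xr xr' eqxx.
- by move: c2x'; rewrite xr (negPf c2r).
- by move: c2x; rewrite xr' (negPf c2r).
- by move: (Cc2 _ (eqP c2x)); rewrite c2x'.
Qed.
End N.
Section Q.
Variable F : closedFieldType.
Hypothesis hchar : (2%:R : F) != 0.
Local Notation P := {poly F}.

Lemma gcd_noroot (A : 'M[P]_2) z : gcd_mx_is_one A ->
  (A 0 0).[z] = 0 -> (A 0 1).[z] = 0 -> (A 1 0).[z] = 0 -> (A 1 1).[z] = 0 -> False.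
Proof.
move=> [c hc] h00 h01 h10 h11.
have := congr1 (horner^~ z) hc; rewrite sum2 !sum2 !hornerD !hornerM h00 h01 h10 h11 hornerC.
by rewrite !mulr0 !addr0 => /eqP; rewrite eq_sym oner_eq0.
Qed.

Lemma stepLam (A : 'M[P]_2) : skew_hermitian A -> gcd_mx_is_one A -> \det A != 0 ->
  exists2 A1, c1 A A1 & forall r, (\det A).[r] = 0 -> (A1 0 0).[r] != 0.
Proof.
move=> sA gA dA0.
have [s00 s11 s10] := skewE sA.
have dAE := detskew sA.
set dl := \det A in dA0 dAE *.
have [rs ers] := closed_field_poly_normal dl.
pose Q z : P := ((A 0 0).[z])%:P + ((A 0 1).[z] - (pstar (A 0 1)).[z]) *: 'X
   + (A 1 1).[z] *: 'X^2.
have Qnz z : dl.[z] = 0 -> Q z != 0.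
  move=> dz; apply/negP => /eqP Q0.
  have q0 := congr1 (fun p : P => p`_0) Q0.
  have q1 := congr1 (fun p : P => p`_1) Q0.
  have q2 := congr1 (fun p : P => p`_2) Q0.
  move: q0 q1 q2; rewrite /Q /= !coefE /=.
  rewrite !mulr0 !mulr1 !addr0 !add0r => ha /eqP; rewrite subr_eq0 => /eqP he hd.
  have hb : (A 0 1).[z] = 0.
    move: dz; rewrite dAE hornerD !hornerM ha hd mul0r add0r -he => /eqP.
    by rewrite mulf_eq0 orbb => /eqP.
  apply: (gcd_noroot gA ha hb _ hd).
  by rewrite s10 hornerN -he hb oppr0.
have lc0 : lead_coef dl != 0 by rewrite lead_coef_eq0.
have rootE z : (dl.[z] == 0) = (z \in rs).
  by rewrite -[dl.[z] == 0]/(root dl z) {1}ers rootZ // root_prod_XsubC.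
have PQ0 : \prod_(z <- rs) Q z != 0.
  rewrite prodf_seq_neq0; apply/allP => z zin /=; apply: Qnz; apply/eqP.
  by rewrite rootE.
have [la nla] := closed_nonrootP _ PQ0.
set S := mk2 1 0 la%:P 1.
have dS : \det S = 1 by rewrite det2 !mk2E; ring.
exists (mxstar S *m A *m S); first by exists S.
move=> r /eqP; rewrite rootE => rin.
move: nla; rewrite /root horner_prod prodf_seq_neq0 => /allP /(_ r rin) /=.
rewrite congE !mk2E pstar1 pstarC s10 /Q.
rewrite !(hornerD, hornerM, hornerN, hornerC, hornerX, hornerZ, hornerXn) ?expr2.
by congr (_ != _); ring.
Qed.
End Q.
Section R.
Variable F : closedFieldType.
Hypothesis hchar : (2%:R : F) != 0.
Local Notation P := {poly F}.

Lemma c1_sym (A B : 'M[P]_2) : c1 A B -> c1 B A.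
Proof.
move=> [S dS ->]; have uS : S \in unitmx by rewrite unitmxE dS unitr1.
exists (invmx S); first by rewrite det_inv dS invr1.
have -> : mxstar (invmx S) *m (mxstar S *m A *m S) *m invmx S
   = mxstar (S *m invmx S) *m A *m (S *m invmx S) by rewrite mxstar_mul !mulmxA.
by rewrite mulmxV // mxstar1 mul1mx mulmx1.
Qed.

Lemma pstar_det (A : 'M[P]_2) : skew_hermitian A -> pstar (\det A) = \det A.
Proof.
move=> sA; have [s00 s11 _] := skewE sA.
by rewrite detskew // pstarD !pstarM s00 s11 pstarK; ring.
Qed.

Lemma odd0 (a : P) : pstar a = - a -> a.[0] = 0.
Proof.
move=> h; have := congr1 (horner^~ 0) h; rewrite /= pstar_horner oppr0 hornerN.
move/eqP; rewrite -subr_eq0 opprK -mulr2n -mulr_natr mulf_eq0 (negPf hchar) orbF.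
by move/eqP.
Qed.

Lemma delta0 (A : 'M[P]_2) : skew_hermitian A -> gcd_mx_is_one A -> (\det A).[0] != 0.
Proof.
move=> sA gA; have [s00 s11 s10] := skewE sA.
have a0 := odd0 s00; have d0 := odd0 s11.
apply/negP => /eqP h; move: h; rewrite detskew // hornerD !hornerM a0 mul0r add0r.
rewrite pstar_horner oppr0 => /eqP; rewrite mulf_eq0 orbb => /eqP b0.
apply: (gcd_noroot gA a0 b0 _ d0).
by rewrite s10 hornerN pstar_horner oppr0 b0 oppr0.
Qed.

Lemma stepT (A : 'M[P]_2) : skew_hermitian A -> \det A != 0 -> (\det A).[0] != 0 ->
  (forall r, (\det A).[r] = 0 -> (A 0 0).[r] != 0) ->
  exists2 B, c1 A B & B 0 0 = 'X.
Proof.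
move=> sA dA0 d00 H.
have [c [hc Cc]] := factor_norm hchar dA0 (pstar_det sA) d00.
have [B cAB [B00 B01 CB]] := stepIso sA dA0 H hc Cc.
have sB := c1_skew sA cAB.
have [C cBC C00] := stepL hchar sB B00 (bez B01 CB).
by exists C => //; apply: c1_trans cAB cBC.
Qed.

Lemma stepC (A : 'M[P]_2) : skew_hermitian A -> A 0 0 = 'X ->
  exists2 B, c1 A B & [/\ B 0 0 = 'X, B 0 1 = ((A 0 1).[0])%:P & B 1 0 = - ((A 0 1).[0])%:P].
Proof.
move=> sA a0; set b := A 0 1; set b0 := b.[0].
have : root (b - b0%:P) 0 by rewrite /root hornerD hornerN hornerC subrr.
move=> /factor_theorem[q eq].
set S := mk2 1 (- q) 0 1.
have dS : \det S = 1 by rewrite det2 !mk2E; ring.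
have cAB : c1 A (mxstar S *m A *m S) by exists S.
have sB := c1_skew sA cAB.
have [_ _ s10] := skewE sB.
have B01 : (mxstar S *m A *m S) 0 1 = b0%:P.
  rewrite congE !mk2E pstar1 pstar0 a0 -/b.
  have -> : b = b0%:P + q * ('X - 0%:P) by rewrite -eq addrC subrK.
  by rewrite subr0; ring.
exists (mxstar S *m A *m S) => //; split => //.
  by rewrite congE !mk2E pstar1 pstar0 a0; ring.
by rewrite s10 B01 pstarC.
Qed.

Lemma canon (A : 'M[P]_2) : skew_hermitian A -> gcd_mx_is_one A -> \det A != 0 ->
  exists (be : F) (dd : P), c1 A (mk2 'X be%:P (- be%:P) dd).
Proof.
move=> sA gA dA0.
have [A1 cA1 H] := stepLam sA gA dA0.
have sA1 := c1_skew sA cA1.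
have dA1 := c1_det cA1.
have [A2 cA2 A2X] : exists2 B, c1 A1 B & B 0 0 = 'X.
  by apply: stepT; rewrite // dA1 //; exact: delta0.
have sA2 := c1_skew sA1 cA2.
have [A3 cA3 [e0 e1 e2]] := stepC sA2 A2X.
exists (A2 0 1).[0], (A3 1 1).
have -> : mk2 'X ((A2 0 1).[0])%:P (- ((A2 0 1).[0])%:P) (A3 1 1) = A3.
  by apply: mx2P; rewrite !mk2E.
by apply: c1_trans (c1_trans cA1 cA2) cA3.
Qed.

End R.
Theorem lemma4p4 (F : closedFieldType) (hchar : (2%:R : F) != 0)
  (A B : 'M[{poly F}]_2) :
  skew_hermitian A -> skew_hermitian B ->
  gcd_mx_is_one A -> gcd_mx_is_one B ->
  \det A = \det B -> \det A != 0 ->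
  congruent A B.
Proof.
move=> sA sB gA gB dAB dA0.
have dB0 : \det B != 0 by rewrite -dAB.
have [ba [da cA]] := canon hchar sA gA dA0.
have [bb [db cB]] := canon hchar sB gB dB0.
have detM (be : F) (dd : {poly F}) : \det (mk2 'X be%:P (- be%:P) dd) = 'X * dd + (be * be)%:P.
  by rewrite det2 !mk2E polyCM; ring.
have hA := c1_det cA; have hB := c1_det cB.
rewrite detM in hA; rewrite detM in hB.
have e : 'X * da + (ba * ba)%:P = 'X * db + (bb * bb)%:P by rewrite hA hB.
have e0 : ba * ba = bb * bb.
  by have := congr1 (horner^~ 0) e; rewrite /= !hornerD !hornerM hornerX !hornerC !mul0r !add0r.
have ed : da = db.
  have X0 : ('X : {poly F}) != 0 by rewrite polyX_eq0.
  by apply: (mulfI X0); apply: (addIr (ba * ba)%:P); rewrite e e0.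
have [eb|eb] : bb = ba \/ bb = - ba.
  have : (bb - ba) * (bb + ba) == 0 by rewrite mulrDr !mulrBl -e0 [ba * bb]mulrC; apply/eqP; ring.
  by rewrite mulf_eq0 subr_eq0 addr_eq0 => /orP[/eqP|/eqP]; [left|right].
- apply: c1_cong; apply: c1_trans cA _; apply: c1_sym; rewrite ed -eb; exact: cB.
- set D := mk2 (1 : {poly F}) 0 0 (-1).
  have [S dS eS] := cA.
  have [U dU eU] := c1_sym cB.
  exists (S *m D *m U).
    by rewrite !unitmx_mul !unitmxE dS dU det2 !mk2E mulr0 subr0 mulrN1 unitrN unitr1.
  rewrite eU (_ : mk2 'X bb%:P (- bb%:P) db = mxstar D *m mk2 'X ba%:P (- ba%:P) da *m D).
    by rewrite eS !mxstar_mul !mulmxA.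
  apply: mx2P; rewrite congE !mk2E; rewrite ?pstar1 ?pstar0 ?pstarN ?pstar1 ?eb ?ed; ring.
Qed.
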